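(* Let $D$ be a tournament missing disjoint paths of length 2 and let $C$ be a double cycle in $\Delta(D)$. Then $K(C)$ is an interval of $D$, i.e. for all $u,v\in K(C)$ we have $N^+(u)\setminus K(C)=N^+(v)\setminus K(C)$ and $N^-(u)\setminus K(C)=N^-(v)\setminus K(C)$.
   Context: All digraphs are finite oriented graphs; $N^+(v)$, $N^-(v)$ are out- and in-neighborhoods in $D$, and $N^{++}(v)$ is the set of vertices $w\notin N^+(v)\cup\{v\}$ with $u\to w$ for some $u\in N^+(v)$. A missing edge is a pair of distinct non-adjacent vertices; the missing graph is formed by the missing edges. $D$ is a tournament missing disjoint paths of length 2 if its missing graph is a vertex-disjoint union of paths each with exactly two edges. For missing edges $\{x,y\},\{a,b\}$, $\{x,y\}$ loses to $\{a,b\}$ (written $xy\to ab$) if the endpoints can be labelled so that $x\to a$, $b\notin N^+(x)\cup N^{++}(x)$, $y\to b$, $a\notin N^+(y)\cup N^{++}(y)$. $\Delta(D)$ has the missing edges as vertices and arcs $(e,e')$ whenever $e$ loses to $e'$. For missing paths $abc$, $xyz$ (edges $ab,bc$ and $xy,yz$), $abc\to xyz$ means each of $ab,bc$ loses to each of $xy,yz$. A double cycle is a sequence $C=a_1b_1c_1,\dots,a_kb_kc_k$ ($k\ge2$) of distinct missing paths of length 2 (components of the missing graph) with $a_ib_ic_i\to a_{i+1}b_{i+1}c_{i+1}$ for all $i$, indices modulo $k$. $K(C)=\{a_i,b_i,c_i: 1\le i\le k\}$. *)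

(* Defs.v *)
From mathcomp Require Import all_boot.
Set Implicit Arguments. Unset Strict Implicit. Unset Printing Implicit Defensive.

Section Defs.
Variable V : finType.
Variable arc : rel V.

Definition oriented := (forall v, ~~ arc v v) /\ (forall u v, arc u v -> ~~ arc v u).

Definition outN (v : V) : {set V} := [set w | arc v w].
Definition inN (v : V) : {set V} := [set w | arc w v].
Definition outN2 (v : V) : {set V} :=
  [set w | (w \notin outN v) && (w != v) && [exists u, arc v u && arc u w]].

Definition missing (x y : V) : bool := (x != y) && ~~ arc x y && ~~ arc y x.

Definition mnb (v : V) : {set V} := [set w | missing v w].

(* the missing graph is a vertex-disjoint union of paths with exactly two edges:
   every vertex incident to a missing edge lies in a component a-b-c which is
   exactly a path of length 2 *)
Definition tmdp2 : Prop :=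
  oriented /\
  forall v, mnb v != set0 ->
    exists a b c, v \in [set a; b; c] /\ a != c /\
      mnb a = [set b] /\ mnb b = [set a; c] /\ mnb c = [set b].

Definition mpath (a b c : V) : bool := missing a b && missing b c && (a != c).

(* ordered version of "xy loses to ab" with the given labelling *)
Definition loses_lab (x y a b : V) : bool :=
  [&& arc x a, b \notin outN x :|: outN2 x, arc y b & a \notin outN y :|: outN2 y].

Definition loses (x y a b : V) : bool :=
  [|| loses_lab x y a b, loses_lab y x a b, loses_lab x y b a | loses_lab y x b a].

Definition delta_arc (x y a b : V) : bool := [&& missing x y, missing a b & loses x y a b].

Definition path_arc (p q : V * V * V) : bool :=
  let: (a, b, c) := p in let: (x, y, z) := q in
  [&& delta_arc a b x y, delta_arc a b y z, delta_arc b c x y & delta_arc b c y z].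

Definition pverts (p : V * V * V) : {set V} := let: (a, b, c) := p in [set a; b; c].

Definition double_cycle (k : nat) (C : 'I_k -> V * V * V) : Prop :=
  2 <= k /\
  (forall i, let: (a, b, c) := C i in mpath a b c) /\
  (forall i j, i != j -> pverts (C i) != pverts (C j)) /\
  (forall i, path_arc (C i) (C (ordS i))).

Definition KC (k : nat) (C : 'I_k -> V * V * V) : {set V} := \bigcup_(i < k) pverts (C i).

End Defs.

(* Main.v *)
Require Import Defs.
From mathcomp Require Import all_boot.
From mathcomp Require Import zify.
Set Implicit Arguments. Unset Strict Implicit. Unset Printing Implicit Defensive.

Section Gen.
Variable V : finType.
Variable arc : rel V.
Hypothesis Hor : oriented arc.
Hypothesis Hcomp : forall v, mnb arc v != set0 ->
    exists a b c, v \in [set a; b; c] /\ a != c /\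
      mnb arc a = [set b] /\ mnb arc b = [set a; c] /\ mnb arc c = [set b].

Lemma missingC x y : missing arc x y = missing arc y x.
Proof. by rewrite /missing eq_sym; case: (arc x y); case: (arc y x); rewrite ?andbT ?andbF. Qed.

Lemma arc_asym x y : arc x y -> arc y x -> False.
Proof. by move=> h1 h2; move: (Hor.2 _ _ h1); rewrite h2. Qed.

Lemma arc_neq x y : arc x y -> x != y.
Proof. by move=> h; apply/eqP=> E; move: (Hor.1 x); rewrite {2}E h. Qed.

Lemma comp_lemma a b c : mpath arc a b c ->
  mnb arc a = [set b] /\ mnb arc b = [set a; c] /\ mnb arc c = [set b].
Proof.
case/andP => /andP [Mab Mbc] nac.
have aB : a \in mnb arc b by rewrite inE missingC.
have cB : c \in mnb arc b by rewrite inE.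
have ne : mnb arc b != set0 by apply/set0Pn; exists a.
have [a' [b' [c' [Hv [nac' [Ma [Mb Mc]]]]]]] := Hcomp ne.
move: Hv; rewrite !inE; case/orP => [/orP [/eqP Eb|/eqP Eb]|/eqP Eb].
- rewrite Eb Ma !inE in aB cB.
  by move: nac; rewrite (eqP aB) (eqP cB) eqxx.
- rewrite Eb Mb !inE in aB cB.
  case/orP: aB => /eqP Ea; case/orP: cB => /eqP Ec.
  + by move: nac; rewrite Ea Ec eqxx.
  + by rewrite Ea Ec Eb Ma Mb Mc.
  + by rewrite Ea Ec Eb Ma Mb Mc setUC.
  + by move: nac; rewrite Ea Ec eqxx.
- rewrite Eb Mc !inE in aB cB.
  by move: nac; rewrite (eqP aB) (eqP cB) eqxx.
Qed.

Definition Rc (y z : V) : bool :=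
  (z == y) || (z \in mnb arc y) || [exists t, (t \in mnb arc y) && (z \in mnb arc t)].

Lemma ex1 (P : pred V) b : [exists t, (t \in [set b]) && P t] = P b.
Proof.
apply/existsP/idP => [[t /andP [] ]|Pb]; first by rewrite inE => /eqP ->.
by exists b; rewrite inE eqxx.
Qed.

Lemma ex2 (P : pred V) a c : [exists t, (t \in [set a; c]) && P t] = P a || P c.
Proof.
apply/existsP/idP => [[t /andP [] ]|].
  by rewrite !inE => /orP [] /eqP -> ->; rewrite ?orbT.
by case/orP=> H; [exists a | exists c]; rewrite !inE eqxx ?orbT.
Qed.

Lemma pv_R a b c y : mpath arc a b c -> y \in [set a; b; c] ->
  [set a; b; c] = [set z | Rc y z].
Proof.
move=> Hp; have [Ma [Mb Mc]] := comp_lemma Hp.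
rewrite !inE; case/orP => [/orP [/eqP ->|/eqP ->]|/eqP ->]; apply/setP => z; rewrite !inE /Rc.
- rewrite Ma (ex1 (fun t => z \in mnb arc t)) Mb !inE.
  by case: (z == a); case: (z == b); case: (z == c).
- rewrite Mb (ex2 (fun t => z \in mnb arc t)) Ma Mc !inE.
  by case: (z == a); case: (z == b); case: (z == c).
- rewrite Mc (ex1 (fun t => z \in mnb arc t)) Mb !inE.
  by case: (z == a); case: (z == b); case: (z == c).
Qed.


Lemma lab_swap x y a b : loses_lab arc x y a b -> loses_lab arc y x b a.
Proof. by case/and4P => h1 h2 h3 h4; apply/and4P. Qed.

Lemma lab_core x y a b : missing arc x y -> (arc x b || arc b x) ->
  loses_lab arc x y a b -> arc b x /\ forall u, ~~ (arc x u && arc u b).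
Proof.
move=> Mxy Axb /and4P [xa nb yb na].
move: nb; rewrite !inE negb_or => /andP [nb1 nb2].
have nbx : b != x.
  apply/eqP => E; move: Mxy; rewrite /missing -E yb; by rewrite !andbF.
split; first by move: Axb; rewrite (negbTE nb1).
move=> u; apply/negP => /andP [xu ub]; move/negP: nb2; apply.
by rewrite nb1 nbx /=; apply/existsP; exists u; rewrite xu ub.
Qed.

Section W.
Variable w : V.

Lemma lab_prop x y a b : missing arc x y -> (arc b w || arc w b) ->
  loses_lab arc x y a b -> arc x w -> arc b w.
Proof.
move=> Mxy Abw /and4P [xa nb yb na] xw; case/orP: Abw => // wb.
move: nb; rewrite !inE negb_or => /andP [nb1 nb2].
have nbx : b != x.
  apply/eqP => E; move: Mxy; rewrite /missing -E yb; by rewrite !andbF.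
move/negP: nb2; case; rewrite nb1 nbx /=; apply/existsP; exists w; by rewrite xw wb.
Qed.

Lemma lab_le x y a b : missing arc x y -> (arc a w || arc w a) -> (arc b w || arc w b) ->
  loses_lab arc x y a b -> arc x w + arc y w <= arc a w + arc b w.
Proof.
move=> Mxy Aa Ab L.
have h1 := lab_prop Mxy Ab L.
have h2 := lab_prop (etrans (missingC _ _) Mxy) Aa (lab_swap L).
by move: h1 h2; case: (arc x w); case: (arc y w); case: (arc a w); case: (arc b w);
  move=> // h1 h2; (try by move: (h1 isT)); (try by move: (h2 isT)).
Qed.

Lemma loses_le x y a b : missing arc x y -> (arc a w || arc w a) -> (arc b w || arc w b) ->
  loses arc x y a b -> arc x w + arc y w <= arc a w + arc b w.
Proof.
move=> Mxy Aa Ab /or4P [] L.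
- exact: lab_le.
- rewrite addnC; apply: lab_le => //; by rewrite missingC.
- rewrite [arc a w + _]addnC; exact: lab_le.
- rewrite addnC [arc a w + _]addnC; apply: lab_le => //; by rewrite missingC.
Qed.

Lemma lab_rule x y a b : missing arc x y -> (arc x b || arc b x) -> (arc y a || arc a y) ->
  (arc a w || arc w a) -> (arc b w || arc w b) ->
  loses_lab arc x y a b -> ~~ (arc a w && arc b w) ->
  forall s s', (s == x) || (s == y) -> (s' == a) || (s' == b) -> arc s w -> arc s' w ->
  arc s' s /\ forall u, ~~ (arc s u && arc u s').
Proof.
move=> Mxy Axb Aya Aa Ab L nab s s' Hs Hs' sw s'w.
have Myx : missing arc y x by rewrite missingC.
case/orP: Hs => /eqP Es; subst s.
- have bw := lab_prop Mxy Ab L sw.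
  case/orP: Hs' => /eqP Es'; subst s'.
  + by move: nab; rewrite bw s'w.
  + exact: lab_core Mxy Axb L.
- have aw := lab_prop Myx Aa (lab_swap L) sw.
  case/orP: Hs' => /eqP Es'; subst s'.
  + exact: lab_core Myx Aya (lab_swap L).
  + by move: nab; rewrite aw s'w.
Qed.

Lemma loses_rule x y a b : missing arc x y ->
  (arc x b || arc b x) -> (arc y a || arc a y) -> (arc x a || arc a x) -> (arc y b || arc b y) ->
  (arc a w || arc w a) -> (arc b w || arc w b) ->
  loses arc x y a b -> ~~ (arc a w && arc b w) ->
  forall s s', (s == x) || (s == y) -> (s' == a) || (s' == b) -> arc s w -> arc s' w ->
  arc s' s /\ forall u, ~~ (arc s u && arc u s').
Proof.
move=> Mxy Axb Aya Axa Ayb Aa Ab /or4P [] L nab s s' Hs Hs'.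
- exact: lab_rule Hs Hs'.
- apply: (lab_rule (x:=y) (y:=x) (a:=a) (b:=b)) => //; first by rewrite missingC.
  by rewrite orbC.
- apply: (lab_rule (x:=x) (y:=y) (a:=b) (b:=a)) => //; first by rewrite andbC.
  by rewrite orbC.
- apply: (lab_rule (x:=y) (y:=x) (a:=b) (b:=a)) => //; first by rewrite missingC.
  by rewrite andbC. by rewrite orbC. by rewrite orbC.
Qed.

End W.
End Gen.

Section Cyc.
Variables (V : finType) (arc : rel V) (k : nat) (C : 'I_k -> V * V * V).
Hypothesis Ht : tmdp2 arc.
Hypothesis Hdc : double_cycle arc C.

Let Hor : oriented arc := proj1 Ht.
Let Hcomp := proj2 Ht.

Definition pa i := (C i).1.1.
Definition pb i := (C i).1.2.
Definition pc i := (C i).2.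
Definition pv i := [set pa i; pb i; pc i].

Lemma pvE i : pverts (C i) = pv i.
Proof. by rewrite /pv /pa /pb /pc; case: (C i) => [[a b] c]. Qed.

Lemma mpi i : mpath arc (pa i) (pb i) (pc i).
Proof. by move: (Hdc.2.1 i); rewrite /pa /pb /pc; case: (C i) => [[a b] c]. Qed.

Lemma parc i : [&& delta_arc arc (pa i) (pb i) (pa (ordS i)) (pb (ordS i)),
  delta_arc arc (pa i) (pb i) (pb (ordS i)) (pc (ordS i)),
  delta_arc arc (pb i) (pc i) (pa (ordS i)) (pb (ordS i)) &
  delta_arc arc (pb i) (pc i) (pb (ordS i)) (pc (ordS i))].
Proof.
move: (Hdc.2.2.2 i); rewrite /pa /pb /pc.
by case: (C i) => [[a b] c]; case: (C (ordS i)) => [[x y] z].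
Qed.

Lemma pv_K i z : z \in pv i -> z \in KC C.
Proof. by move=> h; apply/bigcupP; exists i => //; rewrite pvE. Qed.

Lemma KC_pv z : z \in KC C -> exists i, z \in pv i.
Proof. by case/bigcupP => i _; rewrite pvE; exists i. Qed.

Lemma shared i j z : z \in pv i -> z \in pv j -> i = j.
Proof.
move=> hi hj; apply/eqP; apply: contraT => nij.
move: (Hdc.2.2.1 i j nij); rewrite !pvE /pv.
by rewrite (pv_R Hcomp (mpi i) hi) (pv_R Hcomp (mpi j) hj) eqxx.
Qed.

Lemma mnb_sub i x z : x \in pv i -> missing arc x z -> z \in pv i.
Proof.
move=> hx M; rewrite /pv (pv_R Hcomp (mpi i) hx) inE /Rc inE M.
by rewrite orbT.
Qed.

Lemma cross_adj i j x y : i != j -> x \in pv i -> y \in pv j -> arc x y || arc y x.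
Proof.
move=> nij hx hy; apply: contraT; rewrite negb_or => /andP [nxy nyx].
case: (eqVneq x y) => [Exy|nexy].
  by move: nij; rewrite (shared hx (_ : x \in pv j)) ?eqxx // Exy.
have M : missing arc x y by rewrite /missing nexy nxy nyx.
by move: nij; rewrite (shared (mnb_sub hx M) hy) eqxx.
Qed.

Section W.
Variable w : V.
Hypothesis wK : w \notin KC C.

Lemma out_adj x : x \in KC C -> arc x w || arc w x.
Proof.
case/KC_pv => i hx; apply: contraT; rewrite negb_or => /andP [nxy nyx].
case: (eqVneq x w) => [Exy|nexy].
  by move: wK; rewrite -Exy (pv_K hx).
have M : missing arc x w by rewrite /missing nexy nxy nyx.
by move: wK; rewrite (pv_K (mnb_sub hx M)).
Qed.


Definition ab i := arc (pa i) w + arc (pb i) w.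
Definition bc i := arc (pb i) w + arc (pc i) w.

Lemma inpv i : [/\ pa i \in pv i, pb i \in pv i & pc i \in pv i].
Proof. by rewrite !inE !eqxx ?orbT. Qed.

Lemma adjw i z : z \in pv i -> arc z w || arc w z.
Proof. by move=> h; apply: out_adj; apply: (pv_K h). Qed.

Lemma step i : [/\ ab i <= ab (ordS i), ab i <= bc (ordS i), bc i <= ab (ordS i)
   & bc i <= bc (ordS i)].
Proof.
have [ha hb hc] := inpv (ordS i).
move: (parc i) => /and4P [] /and3P [M1 _ L1] /and3P [_ _ L2] /and3P [M3 _ L3] /and3P [_ _ L4].
split; apply: loses_le => //; apply: adjw; eassumption.
Qed.

End W.

Lemma val_iter m i : val (iter m (@ordS k) i) = (i + m) %% k.
Proof.
elim: m => [|m IH] /=; first by rewrite addn0 modn_small.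
by rewrite IH addnS -addn1 modnDml addn1.
Qed.

Lemma reach (i j : 'I_k) : iter (j + (k - i)) (@ordS k) i = j.
Proof.
apply: val_inj; rewrite val_iter.
have -> : i + (j + (k - i)) = j + k.
  have := ltn_ord i; lia.
by rewrite modnDr modn_small.
Qed.

Lemma iterk (i : 'I_k) : iter k (@ordS k) i = i.
Proof. by apply: val_inj; rewrite val_iter modnDr modn_small. Qed.

Lemma iter_neq m (i : 'I_k) : 0 < m < k -> iter m (@ordS k) i != i.
Proof.
move=> /andP [m0 mk]; apply/eqP => /(congr1 val); rewrite val_iter /=.
have ik := ltn_ord i; move: (nat_of_ord i) ik => n ik.
case: (ltnP (n + m) k) => h.
  rewrite modn_small //; lia.
have -> : n + m = (n + m - k) + k by lia.
rewrite modnDr modn_small; lia.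
Qed.


Section W2.
Variable w : V.
Hypothesis wK : w \notin KC C.

Lemma k2 : 1 < k. Proof. exact: Hdc.1. Qed.

Lemma mono m i : ab w i <= ab w (iter m (@ordS k) i).
Proof.
elim: m => [|m IH] //=.
have [h _ _ _] := step wK (iter m (@ordS k) i); exact: leq_trans IH h.
Qed.

Lemma ab_const i j : ab w i = ab w j.
Proof.
apply/eqP; rewrite eqn_leq.
by rewrite -{1}(reach i j) mono /= -{1}(reach j i) mono.
Qed.

Lemma bc_ab j : bc w j = ab w j.
Proof.
apply/eqP; rewrite eqn_leq.
have [_ _ h1 _] := step wK j.
have [_ h2 _ _] := step wK (ord_pred j).
rewrite ord_predK in h2.
by rewrite {1}(ab_const j (ordS j)) h1 /= (ab_const j (ord_pred j)) h2.
Qed.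

Lemma ord_neq (i : 'I_k) : i != ordS i.
Proof. rewrite eq_sym; apply: (iter_neq (m:=1)); by rewrite /= k2. Qed.

Lemma sum1 (p q : bool) : p + q = 1 -> ~~ (p && q).
Proof. by case: p; case: q. Qed.

Lemma rule_gen i x y a b s s' : x \in pv i -> y \in pv i -> a \in pv (ordS i) -> b \in pv (ordS i) ->
  delta_arc arc x y a b -> arc a w + arc b w = 1 ->
  (s == x) || (s == y) -> (s' == a) || (s' == b) -> arc s w -> arc s' w ->
  arc s' s /\ forall u, ~~ (arc s u && arc u s').
Proof.
move=> hx hy ha hb /and3P [Mxy _ L] h1.
apply: (loses_rule (w:=w) Mxy) => //; try (apply: (cross_adj (ord_neq i)); done);
  try (apply: adjw; eassumption).
exact: sum1.
Qed.

Hypothesis one : forall i, ab w i = 1.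

Lemma rule i s s' : s \in pv i -> s' \in pv (ordS i) -> arc s w -> arc s' w ->
  arc s' s /\ forall u, ~~ (arc s u && arc u s').
Proof.
move=> hs hs'.
have [ha hb hc] := inpv i; have [ha' hb' hc'] := inpv (ordS i).
have o1 := one (ordS i); have o2 : bc w (ordS i) = 1 by rewrite bc_ab.
move: (parc i) => /and4P [D1 D2 D3 D4].
move: hs hs'; rewrite !inE => /orP [Hs|Hs] /orP [Hs'|Hs'].
- exact: (rule_gen ha hb ha' hb' D1 o1 Hs Hs').
- apply: (rule_gen ha hb hb' hc' D2 o2 Hs); by rewrite Hs' orbT.
- apply: (rule_gen hb hc ha' hb' D3 o1 _ Hs'); by rewrite Hs orbT.
- apply: (rule_gen hb hc hb' hc' D4 o2); by rewrite ?Hs ?Hs' orbT.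
Qed.

Lemma exS i : exists2 s, s \in pv i & arc s w.
Proof.
have := one i; rewrite /ab; have [ha hb _] := inpv i.
case E: (arc (pa i) w); first by exists (pa i).
case E': (arc (pb i) w) => //; by exists (pb i).
Qed.

Lemma chain m : 0 < m < k -> forall i s s', s \in pv i -> s' \in pv (iter m (@ordS k) i) ->
  arc s w -> arc s' w -> arc s' s.
Proof.
elim: m => [|m IH] // /andP [_ mk] i s s' hs hs' sw s'w.
case: (posnP m) => [m0|mpos].
  by subst m; have [] := rule hs hs' sw s'w.
have hm : 0 < m.+1 < k by rewrite mk.
have /orP [//|ss'] := cross_adj (iter_neq i hm) hs' hs.
have [t ht tw] := exS (ordS i).
have hm' : 0 < m < k by rewrite mpos ltnW.
have s't := IH hm' (ordS i) t s' ht; rewrite -iterSr in s't.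
have s't2 := s't hs' tw s'w.
have [_ /(_ s')] := rule hs ht sw tw.
by rewrite ss' s't2.
Qed.

Lemma contra1 : False.
Proof.
have k0 : 0 < k by apply: ltnW k2.
pose i := Ordinal k0.
have [s hs sw] := exS i.
pose j := iter k.-1 (@ordS k) i.
have [s' hs' s'w] := exS j.
have hk : 0 < k.-1 < k by have := k2; lia.
have h1 := chain hk hs hs' sw s'w.
have E : ordS j = i by rewrite /j -iterS prednK // iterk.
rewrite -E in hs.
have [h2 _] := rule hs' hs s'w sw.
exact: (arc_asym Hor h1 h2).
Qed.

End W2.

Lemma key w : w \notin KC C -> forall u v, u \in KC C -> v \in KC C -> arc u w = arc v w.
Proof.
move=> wK.
have k0 : 0 < k by apply: ltnW (k2).
pose i0 := Ordinal k0.
case: (eqVneq (ab w i0) 1) => [c1|c1].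
  by exfalso; apply: (contra1 wK) => i; rewrite (ab_const wK i i0).
have H : forall z, z \in KC C -> arc z w = (ab w i0 == 2).
  move=> z /KC_pv [i hz].
  have e1 := ab_const wK i i0.
  have e2 : bc w i = ab w i0 by rewrite (bc_ab wK) e1.
  move: c1 e1 e2; rewrite /ab /bc; move: (arc (pa i0) w + arc (pb i0) w) => c.
  move: hz; rewrite !inE => /orP [/orP [] | ] /eqP ->;
  move=> nc e1' e2'; move: nc e2'; rewrite -e1';
  by case: (arc (pa i) w); case: (arc (pb i) w); case: (arc (pc i) w).
by move=> u v hu hv; rewrite !H.
Qed.

Lemma in_flip w x : w \notin KC C -> x \in KC C -> arc w x = ~~ arc x w.
Proof.
move=> wK hx; have := out_adj wK hx.
case: (boolP (arc x w)) => [xw|_] /=; last by [].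
move=> _; apply/negP => wx; exact: (arc_asym Hor xw wx).
Qed.
End Cyc.

Theorem proposition4p15 (V : finType) (arc : rel V) (k : nat) (C : 'I_k -> V * V * V) :
  tmdp2 arc -> double_cycle arc C ->
  forall u v, u \in KC C -> v \in KC C ->
    outN arc u :\: KC C = outN arc v :\: KC C /\
    inN arc u :\: KC C = inN arc v :\: KC C.
Proof.
move=> Ht Hdc u v hu hv; split; apply/setP => z; rewrite !inE;
  case: (boolP (z \in KC C)) => //= zK.
- exact: (key Ht Hdc zK hu hv).
- by rewrite (in_flip Ht Hdc zK hu) (in_flip Ht Hdc zK hv) (key Ht Hdc zK hu hv).
Qed.
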